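(* Let $F:\{0,1,2\}^{\mathbb{N}}\to\{0,1,2\}^{\mathbb{N}}$ be defined by $F(c)_i=\rho_{c_{i+1}}(c_i)$, where $\rho_0=\rho_2$ is the permutation $0\mapsto0,1\mapsto2,2\mapsto1$ and $\rho_1$ is $0\mapsto1,1\mapsto2,2\mapsto0$. Then $F$ is bijective and its inverse is the CA $F^{-1}(c)_i=\pi_{c_{i+1}}(c_i)$, where $\pi_0=\pi_1$ is $0\mapsto0,1\mapsto2,2\mapsto1$ and $\pi_2$ is $0\mapsto2,2\mapsto1,1\mapsto0$. Moreover $h(F)=\tfrac12$. Consequently, for every $m\ge1$ the $m$-fold Cartesian product $F_m$ of $F$ (acting coordinatewise on $(\{0,1,2\}^m)^{\mathbb{N}}$) is a bijective CA with neighborhood $\{0,1\}$ whose inverse also has neighborhood $\{0,1\}$, and $h(F_m)=m/2$.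
   Context: $h$ denotes the topological entropy of the dynamical system $(\{0,1,2\}^{\mathbb{N}},F)$, computed with $\log_2$. A CA is a continuous shift-commuting map on a full shift. *)

(* Defs.v *)
From Stdlib Require Import Reals ClassicalEpsilon.
From mathcomp Require Import all_boot.
Set Implicit Arguments. Unset Strict Implicit. Unset Printing Implicit Defensive.

Definition config (A : Type) := nat -> A.

Definition ca2 (A : Type) (f : A -> A -> A) : config A -> config A :=
  fun c i => f (c i) (c i.+1).

Definition i3 (n : nat) : 'I_3 := inord n.
Definition perm3 (a b c : nat) (x : 'I_3) : 'I_3 := i3 (nth 0 [:: a; b; c] x).

Definition rho (s : 'I_3) : 'I_3 -> 'I_3 :=
  if val s == 1 then perm3 1 2 0 else perm3 0 2 1.
Definition pi3 (s : 'I_3) : 'I_3 -> 'I_3 :=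
  if val s == 2 then perm3 2 0 1 else perm3 0 2 1.

Definition Floc (x y : 'I_3) : 'I_3 := rho y x.
Definition F : config 'I_3 -> config 'I_3 := ca2 Floc.
Definition Gloc (x y : 'I_3) : 'I_3 := pi3 y x.
Definition G : config 'I_3 -> config 'I_3 := ca2 Gloc.

Definition Fmloc (m : nat) (x y : {ffun 'I_m -> 'I_3}) : {ffun 'I_m -> 'I_3} :=
  [ffun j => Floc (x j) (y j)].
Definition Fm (m : nat) : config {ffun 'I_m -> 'I_3} -> config {ffun 'I_m -> 'I_3} :=
  ca2 (@Fmloc m).

Definition pbool (P : Prop) : bool :=
  if excluded_middle_informative P then true else false.

Definition window (A : finType) (T : config A -> config A) (k n : nat) (c : config A)
  : {ffun 'I_n * 'I_k -> A} := [ffun ti : 'I_n * 'I_k => iter (nat_of_ord ti.1) T c (nat_of_ord ti.2)].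

(* N(k,n) = number of atoms of the join of T^{-t} P_k, t < n, where P_k is the
   clopen partition of A^N into cylinders of length k *)
Definition nwindows (A : finType) (T : config A -> config A) (k n : nat) : nat :=
  #|[set p : {ffun 'I_n * 'I_k -> A} | pbool (exists c, window T k n c = p)]|.

Definition log2 (x : R) : R := Rdiv (ln x) (ln 2).

(* h(T) = sup_k lim_n (1/n) log2 N(k,n)  (the cylinder partitions P_k are cofinal
   among open covers of the compact space A^N, so this is the topological entropy) *)
Definition has_entropy (A : finType) (T : config A -> config A) (h : R) : Prop :=
  exists hk : nat -> R,
    (forall k, Un_cv (fun n => Rdiv (log2 (INR (nwindows T k n.+1))) (INR n.+1)) (hk k))
    /\ is_lub (fun x => exists k, x = hk k) h.
Arguments Fm m : clear implicits.

(* Main.v *)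
Require Import Defs.
From Stdlib Require Import Reals Lra ClassicalEpsilon FunctionalExtensionality Classical.
From mathcomp Require Import all_boot.
Set Implicit Arguments. Unset Strict Implicit. Unset Printing Implicit Defensive.

Definition o0 : 'I_3 := @Ordinal 3 0 isT.
Definition o1 : 'I_3 := @Ordinal 3 1 isT.
Definition o2 : 'I_3 := @Ordinal 3 2 isT.

Lemma I3_cases (x : 'I_3) : [\/ x = o0, x = o1 | x = o2].
Proof. case: x => [[|[|[|//]]] H]; [constructor 1|constructor 2|constructor 3]; exact: val_inj. Qed.

Lemma val_Floc (x y : 'I_3) :
  val (Floc x y) = nth 0 (if val y == 1 then [:: 1; 2; 0] else [:: 0; 2; 1]) (val x).
Proof.
rewrite /Floc /rho /perm3 /i3; case: ifP => _ /=; rewrite inordK //;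
by case: x => [[|[|[|]]] ?].
Qed.

Lemma val_Gloc (x y : 'I_3) :
  val (Gloc x y) = nth 0 (if val y == 2 then [:: 2; 0; 1] else [:: 0; 2; 1]) (val x).
Proof.
rewrite /Gloc /pi3 /perm3 /i3; case: ifP => _ /=; rewrite inordK //;
by case: x => [[|[|[|]]] ?].
Qed.

Lemma GF_loc (a b c : 'I_3) : Gloc (Floc a b) (Floc b c) = a.
Proof.
apply: val_inj; rewrite val_Gloc !val_Floc.
by case: a => [[|[|[|]]] ?]; case: b => [[|[|[|]]] ?]; case: c => [[|[|[|]]] ?].
Qed.

Lemma FG_loc (a b c : 'I_3) : Floc (Gloc a b) (Gloc b c) = a.
Proof.
apply: val_inj; rewrite val_Floc !val_Gloc.
by case: a => [[|[|[|]]] ?]; case: b => [[|[|[|]]] ?]; case: c => [[|[|[|]]] ?].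
Qed.

Lemma FG_cancel : cancel F G.
Proof. move=> c; apply: functional_extensionality => i; exact: GF_loc. Qed.
Lemma GF_cancel : cancel G F.
Proof. move=> c; apply: functional_extensionality => i; exact: FG_loc. Qed.

Definition Gmloc (m : nat) (x y : {ffun 'I_m -> 'I_3}) : {ffun 'I_m -> 'I_3} :=
  [ffun j => Gloc (x j) (y j)].

Lemma Fm_cancel m : cancel (Fm m) (ca2 (@Gmloc m)).
Proof.
move=> c; apply: functional_extensionality => i; apply/ffunP => j.
by rewrite /ca2 /Gmloc /Fm /ca2 /Fmloc !ffunE GF_loc.
Qed.
Lemma Gm_cancel m : cancel (ca2 (@Gmloc m)) (Fm m).
Proof.
move=> c; apply: functional_extensionality => i; apply/ffunP => j.
by rewrite /ca2 /Gmloc /Fm /ca2 /Fmloc !ffunE FG_loc.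
Qed.

Lemma Floc1 y : Floc o1 y = o2.
Proof. by apply: val_inj; rewrite val_Floc; case: ifP. Qed.
Lemma Floc_not2 x y : x != o1 -> Floc x y != o2.
Proof.
move=> H; apply/negP => /eqP/(congr1 val); rewrite val_Floc.
by case: x H => [[|[|[|]]] ?] //=; case: ifP => //=.
Qed.
Lemma Floc0 x y : x != o0 -> Floc x y = o0 -> x = o2 /\ y = o1.
Proof.
move=> Hx /(congr1 val); rewrite val_Floc => H.
case: x Hx H => [[|[|[|]]] ?] //=; case: ifP => //= /eqP Hy _ _; split; exact: val_inj.
Qed.
Lemma Floc_from0 y : Floc o0 y != o0 -> Floc o0 y = o1 /\ y = o1.
Proof.
move=> H; have Hy : val y == 1.
  apply: contraR H => Hy; apply/eqP/val_inj; by rewrite val_Floc (negbTE Hy).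
split; apply: val_inj; [by rewrite val_Floc Hy | exact/eqP].
Qed.
Lemma Floc_from2 y : Floc o2 y != o0 -> Floc o2 y = o1.
Proof.
move=> H; apply: val_inj; move: H; rewrite val_Floc.
case: ifP => // Hy; case/negP; apply/eqP/val_inj; by rewrite val_Floc Hy.
Qed.

Definition shn (i : nat) (c : config 'I_3) : config 'I_3 := fun j => c (j + i).
Definition X (c : config 'I_3) (t : nat) : 'I_3 := iter t F c 0.

Lemma iterFS t c i : iter t.+1 F c i = Floc (iter t F c i) (iter t F c i.+1).
Proof. by []. Qed.

Lemma iter_shn t i c : iter t F (shn i c) = shn i (iter t F c).
Proof.
elim: t => [|t IH] //=; rewrite IH; apply: functional_extensionality => j.
by rewrite /shn /F /ca2 addSn.
Qed.

Lemma iter_X t c i : iter t F c i = X (shn i c) t.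
Proof. by rewrite /X iter_shn /shn add0n. Qed.

Lemma XS c t : X c t.+1 = Floc (X c t) (X (shn 1 c) t).
Proof. by rewrite /X iterFS iter_shn /shn. Qed.

Lemma search (P : nat -> bool) r s : r <= s -> P r ->
  exists q, [/\ r <= q <= s, P q & forall u, q < u <= s -> ~~ P u].
Proof.
elim: s => [|s IH] Hrs Pr.
  move: Hrs Pr; rewrite leqn0 => /eqP -> Pr.
  exists 0; split => // u /andP [H1 H2]; by move: H1; rewrite ltnNge H2.
case: (ltnP s r) => Hsr.
  have Hr : r = s.+1 by apply/eqP; rewrite eqn_leq Hrs Hsr.
  exists r; split => //; first by rewrite leqnn Hrs.
  move=> u /andP [H1 H2]; by move: H1; rewrite Hr ltnNge H2.
case: (boolP (P s.+1)) => Ps.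
  exists s.+1; split => //; first by rewrite leqnn (leq_trans Hsr).
  move=> u /andP [H1 H2]; by move: H1; rewrite ltnNge H2.
have [q [/andP [Hq1 Hq2] Pq Hu]] := IH Hsr Pr.
exists q; split => //; first by rewrite Hq1 (leq_trans Hq2).
move=> u /andP [H1 H2]; case: (ltnP s u) => Hsu.
  have -> : u = s.+1 by apply/eqP; rewrite eqn_leq H2 Hsu.
  exact: Ps.
by apply: Hu; rewrite H1.
Qed.

Definition ph (c : config 'I_3) (t : nat) : bool := odd (t + (X c t == o1)).

Lemma parity_main T : forall c r s, r <= s -> s <= T ->
  X c r != o0 -> X c s != o0 -> ph c r = ph c s.
Proof.
elim: T => [|T IHT] c r s.
  move=> Hrs; rewrite leqn0 => /eqP Hs; move: Hrs; rewrite Hs leqn0 => /eqP -> //.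
move=> Hrs HsT Hr; elim/ltn_ind: s Hrs HsT => s IHs Hrs HsT Hs.
case: (ltngtP r s) Hrs => // [Hlt _|<-] //.
case: s Hlt IHs HsT Hs => [//|s'] Hlt IHs HsT Hs.
have Hrs' : r <= s' by [].
case: (boolP (X c s' != o0)) => Hs'.
  rewrite (IHs s' (ltnSn _) Hrs' (ltnW HsT) Hs').
  move: Hs; rewrite /ph XS.
  case: (I3_cases (X c s')) Hs' => -> // _.
    by move=> _; rewrite Floc1 /= addn0 addn1.
  move=> H; rewrite (Floc_from2 H) /= addn0 addn1 /=; by case: (odd s').
move: Hs'; rewrite negbK => /eqP Hs0.
move: Hs; rewrite XS Hs0 => Hs.
have [Hs1 Hy1] := Floc_from0 Hs.
have [q [/andP [Hq1 Hq2] Pq Hu]] := @search (fun u => X c u != o0) r s' Hrs' Hr.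
have Hqs : q < s'.
  rewrite ltn_neqAle Hq2 andbT; apply/eqP => Hq; move: Pq; by rewrite Hq Hs0.
have Hq0 : X c q.+1 = o0.
  by apply/eqP; rewrite -[_ == _]negbK; apply: Hu; rewrite ltnSn Hqs.
move: Hq0; rewrite XS => Hq0.
have [Hq2' Hyq] := Floc0 Pq Hq0.
have Hy := IHT (shn 1 c) q s' (ltnW Hqs) HsT.
have Hpar : odd q = odd s'.
  move: Hy; rewrite Hyq Hy1 => /(_ isT isT); rewrite /ph Hyq Hy1 /= !addn1 /=.
  by case: (odd q); case: (odd s').

rewrite (IHs q (leq_trans Hqs (leqnSn _)) Hq1 (leq_trans (ltnW Hqs) (ltnW HsT)) Pq).
rewrite /ph Hq2' XS Hs0 Hs1 /= addn0 addn1 /= Hpar.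
by case: (odd s').
Qed.

Lemma pboolP (P : Prop) : reflect P (pbool P).
Proof. rewrite /pbool; case: excluded_middle_informative => H; by constructor. Qed.

Definition pb (c : config 'I_3) : bool := pbool (exists t, X c t = o1 /\ odd t).

Lemma ones_par c t t' : X c t = o1 -> X c t' = o1 -> odd t = odd t'.
Proof.
wlog Htt : t t' / t <= t'.
  move=> W H1 H2; case: (leqP t t') => H; first exact: W.
  by symmetry; apply: W => //; apply: ltnW.
move=> H1 H2.
have H1' : X c t != o0 by rewrite H1.
have H2' : X c t' != o0 by rewrite H2.
have := parity_main (c:=c) Htt (leqnn t') H1' H2'.
rewrite /ph H1 H2 /= !addn1 /=; by case: (odd t); case: (odd t').
Qed.

Lemma one_par c t : X c t = o1 -> odd t = pb c.
Proof.
move=> H; rewrite /pb; case: pboolP => [[t' [H' Ho]]|Hn].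
  by rewrite (ones_par H H').
by apply/negP => Ho; apply: Hn; exists t.
Qed.

Lemma eq_by_bits (a b : 'I_3) : a != o2 -> b != o2 -> (a == o1) = (b == o1) -> a = b.
Proof.
by case: (I3_cases a) => ->; case: (I3_cases b) => ->.
Qed.

Lemma col_det c d n : X c 0 = X d 0 ->
  (forall t, t < n -> (X c t == o1) = (X d t == o1)) ->
  forall t, t < n -> X c t = X d t.
Proof.
move=> H0 Hb; elim=> [//|t IH] Ht.
have Ht' : t < n by apply: ltnW.
have E := IH Ht'.
case: (boolP (X c t == o1)) => H1.
  by rewrite !XS -E (eqP H1) !Floc1.
apply: eq_by_bits; last exact: Hb.
  by rewrite XS; apply: Floc_not2.
by rewrite XS -E; apply: Floc_not2.
Qed.

Lemma win_det c d k n : 0 < k -> (forall i, i < k -> c i = d i) ->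
  (forall t, t < n -> X (shn k.-1 c) t = X (shn k.-1 d) t) ->
  forall t i, t < n -> i < k -> iter t F c i = iter t F d i.
Proof.
move=> Hk Htop Hcol.
suff H : forall m i, i + m = k.-1 -> forall t, t < n -> iter t F c i = iter t F d i.
  move=> t i Ht Hi; apply: (H (k.-1 - i) i) => //.
  by rewrite subnKC // -ltnS prednK.
elim=> [|m IH] i.
  by rewrite addn0 => -> t Ht; rewrite !iter_X; apply: Hcol.
move=> Him; elim=> [|t IHt] Ht /=.
  apply: Htop; have : i < k.-1 by rewrite -Him addnS ltnS leq_addr.
  move/leq_trans; apply; exact: leq_pred.
have Ht' : t < n by apply: ltnW.
have E1 := IHt Ht'.
have Him' : i.+1 + m = k.-1 by rewrite addSn -addnS.
have E2 := IH i.+1 Him' t Ht'.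
by rewrite /F /ca2 -/F E1 E2.
Qed.

Definition Sw (A : finType) (T : config A -> config A) k n :=
  [set p : {ffun 'I_n * 'I_k -> A} | pbool (exists c, window T k n c = p)].

Lemma nwindowsE (A : finType) (T : config A -> config A) k n : nwindows T k n = #|Sw T k n|.
Proof. by []. Qed.

Definition inh3 : inhabited (config 'I_3) := inhabits (fun _ => o0).

Definition pickc k n (p : {ffun 'I_n * 'I_k -> 'I_3}) : config 'I_3 :=
  epsilon inh3 (fun c => window F k n c = p).

Lemma pickc_spec k n p : p \in Sw F k n -> window F k n (pickc p) = p.
Proof.
rewrite inE => /pboolP Hex; exact: (epsilon_spec inh3 (fun c => window F k n c = p) Hex).
Qed.

Definition code k n (p : {ffun 'I_n * 'I_k -> 'I_3}) :
  ({ffun 'I_k -> 'I_3} * bool * {ffun 'I_(n./2.+1) -> bool})%type :=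
  let c := pickc p in let c' := shn k.-1 c in
  ([ffun i : 'I_k => c i], pb c', [ffun j : 'I_(n./2.+1) => X c' ((j : nat).*2 + pb c') == o1]).

Lemma code_inj k n : 0 < k -> {in Sw F k n &, injective (@code k n)}.
Proof.
move=> Hk p q Hp Hq; rewrite /code.
set c := pickc p; set d := pickc q => [[Etop Epb Ebits]].
rewrite -(pickc_spec Hp) -(pickc_spec Hq) -/c -/d.
have Htop : forall i, i < k -> c i = d i.
  move=> i Hi; have := congr1 (fun f : {ffun 'I_k -> 'I_3} => f (Ordinal Hi)) Etop; by rewrite !ffunE.
apply/ffunP => [[t i]]; rewrite !ffunE /=.
apply: (win_det Hk Htop) => //.
apply: col_det.
  rewrite /X /= /shn add0n; apply: Htop; by rewrite prednK.
move=> u Hu.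
case: (boolP (odd u == pb (shn k.-1 c))) => Hpar.
  have Hj : u./2 < n./2.+1 by rewrite ltnS half_leq // ltnW.
  have := congr1 (fun f : {ffun 'I_(n./2.+1) -> bool} => f (Ordinal Hj)) Ebits; rewrite !ffunE /= -Epb -(eqP Hpar).
  by rewrite addnC odd_double_half.
have Hc : (X (shn k.-1 c) u == o1) = false.
  apply/negP => /eqP /one_par Ho; by rewrite Ho eqxx in Hpar.
have Hd : (X (shn k.-1 d) u == o1) = false.
  apply/negP => /eqP /one_par Ho; by rewrite Ho -Epb eqxx in Hpar.
by rewrite Hc Hd.
Qed.

Lemma nw_upper k n : 0 < k -> nwindows F k n <= 3 ^ k * 2 * 2 ^ (n./2.+1).
Proof.
move=> Hk; rewrite nwindowsE -(card_in_imset (code_inj Hk)).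
apply: leq_trans (max_card _) _.
by rewrite !card_prod !card_ffun !card_ord card_bool.
Qed.

Lemma F00 : Floc o0 o0 = o0. Proof. by apply: val_inj; rewrite val_Floc. Qed.
Lemma F01 : Floc o0 o1 = o1. Proof. by apply: val_inj; rewrite val_Floc. Qed.
Lemma F02 : Floc o0 o2 = o0. Proof. by apply: val_inj; rewrite val_Floc. Qed.
Lemma F20 : Floc o2 o0 = o1. Proof. by apply: val_inj; rewrite val_Floc. Qed.
Lemma F21 : Floc o2 o1 = o0. Proof. by apply: val_inj; rewrite val_Floc. Qed.
Lemma F22 : Floc o2 o2 = o1. Proof. by apply: val_inj; rewrite val_Floc. Qed.
Definition FlocT := (F00, F01, F02, F20, F21, F22, Floc1).

Definition tok (b : nat -> bool) (t : nat) : 'I_3 :=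
  if odd t then (if b t./2 then o2 else o0) else (if b t./2 then o1 else o0).
Definition zq (b : nat -> bool) (t : nat) : 'I_3 :=
  if t is t'.+1 then tok b t' else o0.
Definition Ab (b : nat -> bool) (j : nat) : bool := addb (b j) (b j.+1).
Definition Bb (b : nat -> bool) (j : nat) : bool :=
  if j is j'.+1 then addb (b j') (b j) else b 0.

Lemma tok_even b j : tok b j.*2 = if b j then o1 else o0.
Proof. by rewrite /tok odd_double doubleK. Qed.
Lemma tok_odd b j : tok b j.*2.+1 = if b j then o2 else o0.
Proof. by rewrite /tok /= odd_double /= uphalf_double. Qed.

Lemma even_or_odd t : exists j, t = j.*2 \/ t = j.*2.+1.
Proof.
move: (odd_double_half t); set j := t./2 => H; apply: (ex_intro _ j); rewrite -H.
case: (odd t); [right|left]; by rewrite ?add0n ?add1n.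
Qed.

Lemma IA b t : Floc (tok b t) (zq (Ab b) t) = tok b t.+1.
Proof.
have [j [->|->]] := even_or_odd t.
  rewrite tok_even tok_odd; case: j => [|j] /=.
    by case: (b 0); rewrite FlocT.
  rewrite tok_odd; case: (b j.+1); case: (Ab b j); by rewrite FlocT.
rewrite tok_odd /= tok_even -doubleS tok_even /Ab.
by case: (b j); case: (b j.+1); rewrite FlocT.
Qed.

Lemma IB b t : Floc (zq b t) (tok (Bb b) t) = zq b t.+1.
Proof.
have [j [->|->]] := even_or_odd t.
  case: j => [|j] /=.
    rewrite -[0]/(0.*2) !tok_even /Bb; by case: (b 0); rewrite FlocT.
  rewrite doubleS /= !tok_odd -doubleS !tok_even /Bb.
  by case: (b j); case: (b j.+1); rewrite FlocT.
rewrite /= tok_even.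
rewrite !tok_odd; by case: (b j); case: (Bb b j); rewrite FlocT.
Qed.

Lemma realize_step (w v : nat -> 'I_3) n : (forall t, Floc (w t) (v t) = w t.+1) ->
  (exists c', forall t, t < n -> X c' t = v t) ->
  exists c, forall t, t < n.+1 -> X c t = w t.
Proof.
move=> Hwv [c' Hc']; exists (fun i => if i is i'.+1 then c' i' else w 0).
have Hsh : shn 1 (fun i => if i is i'.+1 then c' i' else w 0) = c'.
  apply: functional_extensionality => j; by rewrite /shn addn1.
elim=> [//|t IH] Ht.
by rewrite XS Hsh IH ?(ltnW Ht) // Hc' // Hwv.
Qed.

Lemma realize n : forall b, (exists c, forall t, t < n -> X c t = tok b t) /\
  (exists c, forall t, t < n -> X c t = zq b t).
Proof.
elim: n => [|n IH] b.
  by split; exists (fun _ => o0).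
split.
  apply: (realize_step (v := zq (Ab b))); first exact: IA.
  exact: (IH (Ab b)).2.
apply: (realize_step (v := tok (Bb b))); first exact: IB.
exact: (IH (Bb b)).1.
Qed.

Definition bf q (f : {ffun 'I_q -> bool}) : nat -> bool :=
  fun j => oapp (fun i : 'I_q => f i) false (insub j).

Lemma bfE q (f : {ffun 'I_q -> bool}) (j : 'I_q) : bf f j = f j.
Proof. by rewrite /bf valK. Qed.

Definition ctok n q (f : {ffun 'I_q -> bool}) : config 'I_3 :=
  epsilon inh3 (fun c => forall t, t < n -> X c t = tok (bf f) t).

Lemma ctok_spec n q (f : {ffun 'I_q -> bool}) t : t < n -> X (ctok n f) t = tok (bf f) t.
Proof.
have Hex := (realize n (bf f)).1.
exact: (epsilon_spec inh3 (fun c => forall t, t < n -> X c t = tok (bf f) t) Hex).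
Qed.

Lemma nw_lower k n : 0 < k -> 2 ^ (n./2) <= nwindows F k n.
Proof.
move=> Hk; rewrite nwindowsE.
pose hw := fun f : {ffun 'I_(n./2) -> bool} => window F k n (ctok n f).
have Hinj : injective hw.
  move=> f g Hfg; apply/ffunP => j.
  have Hj : (j : nat).*2 < n.
    have := odd_double_half n => Hn.
    apply: (@leq_trans (n./2).*2); first by rewrite ltn_double.
    by rewrite -{2}Hn leq_addl.
  have := congr1 (fun p : {ffun 'I_n * 'I_k -> 'I_3} => p (Ordinal Hj, Ordinal Hk)) Hfg.
  rewrite /hw !ffunE /= -!/(X _ _) !ctok_spec // !tok_even !bfE.
  by case: (f j); case: (g j).
have <- : #|hw @: [set: {ffun 'I_(n./2) -> bool}]| = 2 ^ n./2.
  by rewrite card_imset // cardsT card_ffun card_bool card_ord.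
apply: subset_leq_card; apply/subsetP => p /imsetP [f _ ->].
rewrite inE; apply/pboolP; by exists (ctok n f).
Qed.

Lemma nw0 (A : finType) (T : config A -> config A) n (a : A) : nwindows T 0 n = 1.
Proof.
rewrite nwindowsE; apply/eqP; rewrite eqn_leq; apply/andP; split.
  apply: leq_trans (max_card _) _.
  by rewrite card_ffun card_prod !card_ord muln0 expn0.
apply/card_gt0P; exists (window T 0 n (fun _ => a)); rewrite inE; apply/pboolP.
by exists (fun _ => a).
Qed.

Lemma iter_Fm m t (C : config {ffun 'I_m -> 'I_3}) i j :
  iter t (Fm m) C i j = iter t F (fun i' => C i' j) i.
Proof.
elim: t i => [//|t IH] i.
by rewrite iterS /Fm /ca2 /Fmloc ffunE -/(Fm m) !IH.
Qed.


Lemma nwFm m k n : nwindows (Fm m) k n = (nwindows F k n ^ m)%N.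
Proof.
rewrite !nwindowsE.
pose Phi := fun f : {ffun 'I_m -> {ffun 'I_n * 'I_k -> 'I_3}} =>
  [ffun ti => [ffun j => f j ti]] : {ffun 'I_n * 'I_k -> {ffun 'I_m -> 'I_3}}.
have Pinj : injective Phi.
  move=> f g H; apply/ffunP => j; apply/ffunP => ti.
  have := congr1 (fun p : {ffun 'I_n * 'I_k -> {ffun 'I_m -> 'I_3}} => p ti j) H.
  by rewrite /Phi !ffunE.
pose E := [set f : {ffun 'I_m -> {ffun 'I_n * 'I_k -> 'I_3}} | [forall j, f j \in Sw F k n]].
have HE : #|E| = (#|Sw F k n| ^ m)%N.
  have := @card_ffun_on 'I_m {ffun 'I_n * 'I_k -> 'I_3} (Sw F k n).
  rewrite card_ord => <-; apply: eq_card => f.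
  rewrite inE; apply/forallP/ffun_onP => H j; exact: H.
have HS : Sw (Fm m) k n = Phi @: E.
apply/setP => w; rewrite inE; apply/pboolP/imsetP.
  move=> [C HC]; exists [ffun j => window F k n (fun i => C i j)].
    rewrite inE; apply/forallP => j; rewrite ffunE inE; apply/pboolP.
    by exists (fun i => C i j).
  rewrite -HC; apply/ffunP => ti; apply/ffunP => j; by rewrite /Phi !ffunE iter_Fm.
move=> [f Hf ->].
have Hc : forall j, exists c, window F k n c = f j.
  move=> j; move: Hf; rewrite inE => /forallP /(_ j); rewrite inE => /pboolP //.
pose cj := fun j => epsilon inh3 (fun c => window F k n c = f j).
have Hcj : forall j, window F k n (cj j) = f j.
  move=> j; exact: (epsilon_spec inh3 (fun c => window F k n c = f j) (Hc j)).
exists (fun i => [ffun j => cj j i]).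
apply/ffunP => ti; apply/ffunP => j; rewrite /Phi !ffunE iter_Fm -Hcj ffunE.
congr (iter _ F _ _); apply: functional_extensionality => i; by rewrite ffunE.
by rewrite HS (card_imset _ Pinj) HE.
Qed.

Lemma INR_expn a b : INR (a ^ b)%N = pow (INR a) b.
Proof. elim: b => [|b IH] //; by rewrite expnS -multE mult_INR IH. Qed.

Local Open Scope R_scope.

Lemma ln2_pos : 0 < ln 2.
Proof. rewrite -ln_1; apply: ln_increasing; lra. Qed.

Lemma ln_le' x y : 0 < x -> x <= y -> ln x <= ln y.
Proof. move=> Hx [H|->]; [left; exact: ln_increasing | right; reflexivity]. Qed.

Lemma log2_le x y : 0 < x -> x <= y -> log2 x <= log2 y.
Proof.
move=> Hx Hxy; rewrite /log2 /Rdiv; apply: Rmult_le_compat_r.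
  by left; apply: Rinv_0_lt_compat; exact: ln2_pos.
exact: ln_le'.
Qed.

Lemma INR_pos_of n : (0 < n)%N -> 0 < INR n.
Proof. move=> H; apply: lt_0_INR; exact/ltP. Qed.

Lemma INR2 : INR 2 = 2. Proof. simpl; lra. Qed.
Lemma INR3 : INR 3 = 3. Proof. simpl; lra. Qed.

Lemma log2_pow2 a : log2 (INR (2 ^ a)%N) = INR a.
Proof.
rewrite INR_expn INR2 /log2 ln_pow; last lra.
have := ln2_pos; move=> H; field; lra.
Qed.

Lemma log2_up k e : log2 (INR (3 ^ k * 2 ^ e)%N) = INR k * log2 3 + INR e.
Proof.
rewrite -multE mult_INR !INR_expn INR2 INR3 /log2 ln_mult; try (apply: pow_lt; lra).
rewrite !ln_pow; try lra.
have := ln2_pos; move=> H; field; lra.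
Qed.

Lemma log2_powm x m : 0 < x -> log2 (x ^ m) = INR m * log2 x.
Proof. move=> Hx; rewrite /log2 ln_pow //; rewrite /Rdiv; ring. Qed.

Lemma log2_1 : log2 1 = 0.
Proof. by rewrite /log2 ln_1 /Rdiv Rmult_0_l. Qed.

Lemma log2_3_pos : 0 <= log2 3.
Proof.
rewrite /log2 /Rdiv; apply: Rmult_le_pos.
  rewrite -ln_1; apply: ln_le'; lra.
left; apply: Rinv_0_lt_compat; exact: ln2_pos.
Qed.

Lemma half_bounds m : INR m - 1 <= 2 * INR (m./2) <= INR m.
Proof.
have := odd_double_half m => H.
have : INR m = INR (odd m) + 2 * INR m./2.
  by rewrite -{1}H plus_INR -!mul2n -multE mult_INR.
case: (odd m) => /= ->; lra.
Qed.

Lemma squeeze (u : nat -> R) l C :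
  (forall n, Rabs (u n - l) <= C / INR n.+1) -> Un_cv u l.
Proof.
move=> H eps Heps.
have [N HN] := INR_unbounded (C / eps).
exists N => n Hn; rewrite /R_dist.
apply: Rle_lt_trans (H n) _.
have Hn1 : 0 < INR n.+1 by apply: INR_pos_of.
have HNn : INR N <= INR n by apply: le_INR; exact: Hn.
have HS : INR n.+1 = INR n + 1 by rewrite S_INR.
apply/(Rmult_lt_reg_r (INR n.+1)) => //.
rewrite /Rdiv Rmult_assoc Rinv_l; last lra.
rewrite Rmult_1_r.
have : C < eps * INR N.
  move: HN; rewrite /Rgt => HN.
  have := Rmult_lt_compat_l eps _ _ Heps HN.
  rewrite /Rdiv Rmult_comm Rmult_assoc Rinv_l; lra.
move=> HC.
have : eps * INR N <= eps * INR n.+1 by apply: Rmult_le_compat_l; lra.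
lra.
Qed.

Lemma entropy_of (A : finType) (T : config A -> config A) (v : R) (C : nat -> R) :
  (forall n, nwindows T 0 n = 1%N) ->
  (forall k n, (0 < k)%N -> Rabs (log2 (INR (nwindows T k n.+1)) - v * INR n.+1) <= C k) ->
  0 <= v -> has_entropy T v.
Proof.
move=> H0 Hk Hv.
exists (fun k => if k == 0%N then 0 else v); split.
  case=> [|k] /=.
    apply: (squeeze (C := 0)) => n; rewrite H0 log2_1 /Rdiv Rmult_0_l Rminus_0_r Rabs_R0.
    lra.
  apply: (squeeze (C := C k.+1)) => n.
  have Hn1 : 0 < INR n.+1 by apply: INR_pos_of.
  have E : log2 (INR (nwindows T k.+1 n.+1)) / INR n.+1 - v =
    (log2 (INR (nwindows T k.+1 n.+1)) - v * INR n.+1) * / INR n.+1.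
    field; lra.
  rewrite E Rabs_mult (Rabs_pos_eq (/ _)); last by left; apply: Rinv_0_lt_compat.
  apply: Rmult_le_compat_r; first by left; apply: Rinv_0_lt_compat.
  exact: Hk.
split.
  move=> x [k ->]; case: (k == 0%N) => //; lra.
move=> b Hb; apply: Hb; exists 1%N => //.
Qed.

Lemma F_bound k n : (0 < k)%N ->
  Rabs (log2 (INR (nwindows F k n.+1)) - / 2 * INR n.+1) <= INR k * log2 3 + 3.
Proof.
move=> Hk.
have Hlo := nw_lower n.+1 Hk.
have Hup := nw_upper n.+1 Hk.
have Hpos : 0 < INR (2 ^ (n.+1)./2)%N by apply: INR_pos_of; rewrite expn_gt0.
have L1 : INR (n.+1)./2 <= log2 (INR (nwindows F k n.+1)).
  rewrite -log2_pow2; apply: log2_le => //; apply: le_INR; exact/leP.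
have L2 : log2 (INR (nwindows F k n.+1)) <= INR k * log2 3 + INR ((n.+1)./2 + 2).
  rewrite -log2_up; apply: log2_le.
    apply: Rlt_le_trans Hpos _; apply: le_INR; exact/leP.
  apply: le_INR; apply/leP; apply: leq_trans Hup _.
  by rewrite -mulnA -expnS addn2.
move: L2; rewrite -plusE plus_INR INR2 => L2.
have := half_bounds n.+1; rewrite S_INR => Hh.
have := log2_3_pos => H3.
have Hk0 : 0 <= INR k by apply: pos_INR.
have := Rmult_le_pos _ _ Hk0 H3 => Hp.
apply: Rabs_le; split; lra.
Qed.

Definition CF (k : nat) : R := INR k * log2 3 + 3.

Lemma F_bound' k n : (0 < k)%N ->
  Rabs (log2 (INR (nwindows F k n.+1)) - / 2 * INR n.+1) <= CF k.
Proof. exact: F_bound. Qed.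

Lemma Fm_bound m k n : (0 < k)%N ->
  Rabs (INR m * log2 (INR (nwindows F k n.+1)) - INR m / INR 2 * INR n.+1) <= INR m * CF k.
Proof.
move=> Hk.
have E : INR m * log2 (INR (nwindows F k n.+1)) - INR m / INR 2 * INR n.+1 =
    INR m * (log2 (INR (nwindows F k n.+1)) - / 2 * INR n.+1).
  rewrite INR2; field.
rewrite E Rabs_mult (Rabs_pos_eq (INR m)); last exact: pos_INR.
apply: Rmult_le_compat_l; first exact: pos_INR.
exact: F_bound.
Qed.

Lemma half_eq : INR 1 / INR 2 = / 2.
Proof. rewrite INR2 /=; field. Qed.
Lemma half_nonneg : 0 <= / 2.
Proof. lra. Qed.
Lemma m_half_nonneg m : 0 <= INR m / INR 2.
Proof. rewrite INR2; apply: Rmult_le_pos; [exact: pos_INR | lra]. Qed.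
Close Scope R_scope.

Lemma nw_pos k n : (0 < k)%N -> (0 < nwindows F k n)%N.
Proof. move=> Hk; apply: leq_trans (nw_lower n Hk); by rewrite expn_gt0. Qed.

Theorem mainTheorem5 :
  [/\ bijective F, cancel F G, cancel G F, has_entropy F (Rdiv (INR 1) (INR 2)) &
      forall m : nat, 1 <= m ->
        [/\ bijective (Fm m),
            exists g : {ffun 'I_m -> 'I_3} -> {ffun 'I_m -> 'I_3} -> {ffun 'I_m -> 'I_3},
              cancel (Fm m) (ca2 g) /\ cancel (ca2 g) (Fm m)
          & has_entropy (Fm m) (Rdiv (INR m) (INR 2))]].
Proof.
split.
- exact: Bijective FG_cancel GF_cancel.
- exact: FG_cancel.
- exact: GF_cancel.
- rewrite half_eq; apply: (@entropy_of _ F _ CF).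
  + move=> n; exact: (nw0 F n o0).
  + move=> k n Hk; exact: F_bound'.
  + exact: half_nonneg.
move=> m Hm; split.
- exists (ca2 (@Gmloc m)); [exact: Fm_cancel | exact: Gm_cancel].
- exists (@Gmloc m); split; [exact: Fm_cancel | exact: Gm_cancel].
apply: (@entropy_of _ (Fm m) _ (fun k => Rmult (INR m) (CF k))).
- move=> n; exact: (nw0 (Fm m) n [ffun _ => o0]).
- move=> k n Hk.
  rewrite nwFm INR_expn log2_powm; last by apply: INR_pos_of; exact: nw_pos.
  exact: Fm_bound.
- exact: m_half_nonneg.
Qed.
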